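(* Let $G=(V,E)$ be a finite graph with nonnegative interactions $J$, and let $\mu$ be the Ising measure with no external field. Then for any vertices $u,v_1,\dots,v_k\in V$, $$\mathbb E_\mu[\sigma(u)\mid \sigma(v_i)=1\text{ for all }1\le i\le k]\le\sum_{i=1}^k\mathbb E_\mu[\sigma(u)\mid\sigma(v_i)=1].$$
   Context: The Ising measure with no external field is $\mu(\sigma)=Z^{-1}\exp(\sum_{uv\in E}J_{uv}\sigma(u)\sigma(v))$ on $\{\pm1\}^V$, $J_{uv}\ge0$. *)

(* Defs.v *)
From HB Require Import structures.
From mathcomp Require Import all_boot all_order all_algebra.
From mathcomp Require Import reals.
From mathcomp Require Import sequences exp.
Set Implicit Arguments. Unset Strict Implicit. Unset Printing Implicit Defensive.
Import Order.TTheory GRing.Theory Num.Theory.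
Local Open Scope ring_scope.

Definition spin (R : realType) (b : bool) : R := if b then 1 else -1.

(* A finite graph: edges E : {set {set V}}, each edge a 2-element set {u,v};
   interactions J : {set V} -> R. Hamiltonian sum_{uv in E} J_uv s(u) s(v). *)
Definition ising_energy (R : realType) (V : finType) (E : {set {set V}})
  (J : {set V} -> R) (s : {ffun V -> bool}) : R :=
  \sum_(e in E) J e * \prod_(x in e) spin R (s x).

Definition ising_weight (R : realType) (V : finType) (E : {set {set V}})
  (J : {set V} -> R) (s : {ffun V -> bool}) : R :=
  expR (ising_energy E J s).

Definition ising_Z (R : realType) (V : finType) (E : {set {set V}})
  (J : {set V} -> R) : R :=
  \sum_(s : {ffun V -> bool}) ising_weight E J s.

Definition ising_mu (R : realType) (V : finType) (E : {set {set V}})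
  (J : {set V} -> R) (s : {ffun V -> bool}) : R :=
  ising_weight E J s / ising_Z E J.

Definition cond_exp (R : realType) (V : finType) (E : {set {set V}})
  (J : {set V} -> R) (f : {ffun V -> bool} -> R) (A : pred {ffun V -> bool}) : R :=
  (\sum_(s | A s) ising_mu E J s * f s) / (\sum_(s | A s) ising_mu E J s).

(* Main.v *)
Require Import Defs.
From HB Require Import structures.
From mathcomp Require Import all_boot all_order all_algebra.
From mathcomp Require Import reals.
From mathcomp Require Import sequences exp.
From mathcomp Require Import ring lra.
Import Order.TTheory GRing.Theory Num.Theory.
Local Open Scope ring_scope.
Set Implicit Arguments. Unset Strict Implicit. Unset Printing Implicit Defensive.
Definition xs (V : finType) (s r : {ffun V -> bool}) : {ffun V -> bool} :=
  [ffun x => s x == r x].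

Lemma xsK (V : finType) (r : {ffun V -> bool}) : cancel (fun s => xs s r) (fun s => xs s r).
Proof. move=> s; apply/ffunP => x; rewrite !ffunE; by case: (s x); case: (r x). Qed.

Lemma xsC (V : finType) (s r : {ffun V -> bool}) : xs s r = xs r s.
Proof. by apply/ffunP => x; rewrite !ffunE eq_sym. Qed.

Lemma sum_xs (R : realType) (V : finType) (r : {ffun V -> bool}) (F : {ffun V -> bool} -> R) :
  \sum_s F (xs s r) = \sum_s F s.
Proof. by rewrite [RHS](reindex_inj (can_inj (xsK r))). Qed.

Lemma spin_xnor (R : realType) a b : spin R (a == b) = spin R a * spin R b.
Proof. by case: a; case: b; rewrite /spin /= ?mulr1 ?mul1r ?mulrNN ?mulN1r ?mulr1 ?opprK. Qed.

Lemma spin_pm (R : realType) a : spin R a = 1 \/ spin R a = -1.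
Proof. by case: a; [left|right]. Qed.

Definition ae (R : realType) (V : finType) (e : {set V}) (s : {ffun V -> bool}) : R :=
  \prod_(x in e) spin R (s x).

Lemma ae_xs (R : realType) (V : finType) (e : {set V}) s r :
  ae R e (xs s r) = ae R e s * ae R e r.
Proof. by rewrite /ae -big_split; apply: eq_bigr => x _; rewrite ffunE spin_xnor. Qed.

Lemma pm_prod (R : realType) (I : finType) (P : pred I) (F : I -> R) :
  (forall i, F i = 1 \/ F i = -1) -> \prod_(i | P i) F i = 1 \/ \prod_(i | P i) F i = -1.
Proof.
move=> H; apply: (big_ind (fun x : R => x = 1 \/ x = -1)); first by left.
- move=> x y [->|->] [->|->]; rewrite ?mulr1 ?mul1r ?mulrNN ?mulr1; by [left|right].
- by move=> i _; apply: H.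
Qed.

Lemma ae_pm (R : realType) (V : finType) (e : {set V}) s : ae R e s = 1 \/ ae R e s = -1.
Proof. by apply: pm_prod => x; apply: spin_pm. Qed.

Lemma char_sum_ge0 (R : realType) (V : finType) (P : pred {ffun V -> bool})
  (g : {ffun V -> bool} -> R) :
  (forall s, g s = 1 \/ g s = -1) ->
  (forall s r, g (xs s r) = g s * g r) ->
  (forall s r, P s -> P r -> P (xs s r)) ->
  0 <= \sum_s (if P s then g s else 0).
Proof.
move=> gpm gM PM.
case: (boolP [exists r, P r && (g r == -1)]).
  case/existsP => r /andP[Pr /eqP gr].
  set S := \sum_s _.
  have HS : S = - S.
    rewrite {1}/S -(sum_xs r) /S -sumrN; apply: eq_bigr => s _.
    have -> : P (xs s r) = P s.
      apply/idP/idP => Hs; last exact: PM.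
      by rewrite -(xsK r s); apply: PM.
    by case: (P s); rewrite ?oppr0 // gM gr mulrN1.
  lra.
rewrite negb_exists => /forallP H; apply: sumr_ge0 => s _.
case Ps: (P s) => //; have := H s; rewrite Ps /=.
by case: (gpm s) => ->; rewrite ?ler01 ?eqxx.
Qed.
Definition al (R : realType) (V : finType) (E : {set {set V}}) (J : {set V} -> R) e : R :=
  if e \in E then (expR (2 * J e) + expR (- (2 * J e))) / 2 - 1 else 0.
Definition be (R : realType) (V : finType) (E : {set {set V}}) (J : {set V} -> R) e : R :=
  if e \in E then (expR (2 * J e) - expR (- (2 * J e))) / 2 else 0.
Definition io (R : realType) (V : finType) (e : {set V}) (t : {ffun V -> bool}) : R :=
  (1 + ae R e t) / 2.
Definition psi (R : realType) (V : finType) (E : {set {set V}}) (J : {set V} -> R) e s t : R :=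
  1 + io R e t * al E J e + io R e t * be E J e * ae R e s.

Lemma al_ge0 (R : realType) (V : finType) (E : {set {set V}}) (J : {set V} -> R) e :
  0 <= al E J e.
Proof.
rewrite /al; case: (e \in E) => //.
have h1 := expR_ge1Dx (2 * J e); have h2 := expR_ge1Dx (- (2 * J e)).
lra.
Qed.

Lemma be_ge0 (R : realType) (V : finType) (E : {set {set V}}) (J : {set V} -> R) e :
  (forall e, e \in E -> 0 <= J e) -> 0 <= be E J e.
Proof.
move=> hJ; rewrite /be; case eE: (e \in E) => //.
have := hJ e eE => h.
have : expR (- (2 * J e)) <= expR (2 * J e) by rewrite ler_expR; lra.
lra.
Qed.

Lemma w_prod (R : realType) (V : finType) (E : {set {set V}}) (J : {set V} -> R) s t :
  ising_weight E J s * ising_weight E J (xs s t) = \prod_(e : {set V}) psi E J e s t.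
Proof.
rewrite /ising_weight -expRD /ising_energy -big_split /= expR_sum.
rewrite [RHS](bigID (fun e => e \in E)) /=.
rewrite [X in _ = _ * X]big1 ?mulr1; last first.
  by move=> e /negbTE eE; rewrite /psi /al /be eE !mulr0 !mul0r !addr0.
apply: eq_bigr => e eE.
have -> : \prod_(x in e) spin R (xs s t x) = ae R e s * ae R e t.
  by rewrite -ae_xs.
rewrite -/(ae R e s) /psi /al /be /io eE.
set X := expR (2 * J e); set Y := expR (- (2 * J e)).
case: (ae_pm R e s) => ->; case: (ae_pm R e t) => ->.
- rewrite (_ : J e * 1 + J e * (1 * 1) = 2 * J e); last by ring.
  by rewrite -/X; field.
- rewrite (_ : J e * 1 + J e * (1 * -1) = 0); last by ring.
  by rewrite expR0; field.
- rewrite (_ : J e * -1 + J e * (-1 * 1) = - (2 * J e)); last by ring.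
  by rewrite -/Y; field.
- rewrite (_ : J e * -1 + J e * (-1 * -1) = 0); last by ring.
  by rewrite expR0; field.
Qed.
Definition coef (R : realType) (V : finType) (E : {set {set V}}) (J : {set V} -> R)
  (K L : {set {set V}}) : R :=
  \prod_(e : {set V}) (if e \in L then (if e \in K then be E J e else 0)
                       else (if e \in K then al E J e else 1)).
Definition aL (R : realType) (V : finType) (L : {set {set V}}) (s : {ffun V -> bool}) : R :=
  \prod_(e : {set V}) (if e \in L then ae R e s else 1).
Definition ioK (R : realType) (V : finType) (K : {set {set V}}) (t : {ffun V -> bool}) : R :=
  \prod_(e : {set V}) (if e \in K then io R e t else 1).

Lemma expand (R : realType) (V : finType) (E : {set {set V}}) (J : {set V} -> R) s t :
  \prod_(e : {set V}) psi E J e s t =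
  \sum_(K : {set {set V}}) \sum_(L : {set {set V}}) coef E J K L * aL R L s * ioK R K t.
Proof.
rewrite (eq_bigr (fun e => (io R e t * al E J e + io R e t * be E J e * ae R e s) + 1));
  last by move=> e _; rewrite /psi; ring.
rewrite bigA_distr; apply: eq_bigr => K _.
rewrite (eq_bigr (fun e => (if e \in K then io R e t * be E J e * ae R e s else 0) +
                           (if e \in K then io R e t * al E J e else 1))); last first.
  by move=> e _; case: (e \in K); rewrite ?add0r // addrC.
rewrite bigA_distr; apply: eq_bigr => L _.
rewrite /coef /aL /ioK -!big_split; apply: eq_bigr => e _ /=.
by case: (e \in L); case: (e \in K); rewrite ?mulr1 ?mul1r ?mul0r //; ring.
Qed.
Lemma DZ_expand (R : realType) (V : finType) (E : {set {set V}}) (J : {set V} -> R)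
  (p q : {ffun V -> bool} -> R) :
  \sum_s \sum_t (ising_weight E J s * ising_weight E J (xs s t)) * (p s * q t) =
  \sum_(K : {set {set V}}) \sum_(L : {set {set V}})
     coef E J K L * ((\sum_s aL R L s * p s) * (\sum_t ioK R K t * q t)).
Proof.
pose F K L s t := coef E J K L * (aL R L s * p s) * (ioK R K t * q t).
transitivity (\sum_s \sum_t \sum_(K : {set {set V}}) \sum_(L : {set {set V}}) F K L s t).
  apply: eq_bigr => s _; apply: eq_bigr => t _.
  rewrite w_prod expand mulr_suml; apply: eq_bigr => K _.
  rewrite mulr_suml; apply: eq_bigr => L _; rewrite /F; ring.
transitivity (\sum_(K : {set {set V}}) \sum_(L : {set {set V}}) \sum_s \sum_t F K L s t).
  under eq_bigr => s _ do rewrite exchange_big.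
  under eq_bigr => s _ do under eq_bigr => K _ do rewrite exchange_big.
  rewrite exchange_big.
  by under eq_bigr => K _ do rewrite exchange_big.
apply: eq_bigr => K _; apply: eq_bigr => L _.
rewrite mulr_suml mulr_sumr; apply: eq_bigr => s _.
rewrite mulr_sumr mulr_sumr; apply: eq_bigr => t _.
rewrite /F; ring.
Qed.
Lemma coef_ge0 (R : realType) (V : finType) (E : {set {set V}}) (J : {set V} -> R) K L :
  (forall e, e \in E -> 0 <= J e) -> 0 <= coef E J K L.
Proof.
move=> hJ; apply: prodr_ge0 => e _.
case: (e \in L); case: (e \in K) => //; [exact: be_ge0 | exact: al_ge0].
Qed.

Lemma coef_supp (R : realType) (V : finType) (E : {set {set V}}) (J : {set V} -> R) K L :
  coef E J K L != 0 -> (forall e, e \in L -> e \in K) /\ (forall e, e \in K -> e \in E).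
Proof.
move/prodf_neq0 => H; split.
  by move=> e eL; have := H e isT; rewrite eL; case: (e \in K) => //; rewrite eqxx.
move=> e eK; have := H e isT; rewrite eK.
by case: (e \in L); rewrite /be /al; case: (e \in E); rewrite ?eqxx.
Qed.

Lemma aL_xs (R : realType) (V : finType) (L : {set {set V}}) s r :
  aL R L (xs s r) = aL R L s * aL R L r.
Proof.
rewrite /aL -big_split; apply: eq_bigr => e _ /=.
by case: (e \in L); rewrite ?mulr1 // ae_xs.
Qed.

Lemma aL_pm (R : realType) (V : finType) (L : {set {set V}}) s :
  aL R L s = 1 \/ aL R L s = -1.
Proof. by apply: pm_prod => e; case: (e \in L); [apply: ae_pm | left]. Qed.

Lemma ioK_ind (R : realType) (V : finType) (K : {set {set V}}) t :
  ioK R K t = if [forall e in K, ae R e t == 1] then 1 else 0.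
Proof.
case: ifP => [/forallP H|].
  apply: big1 => e _; case eK: (e \in K) => //.
  by rewrite /io; have := H e; rewrite eK /= => /eqP ->; field.
move/negbT; rewrite negb_forall => /existsP [e]; rewrite negb_imply => /andP[eK He].
rewrite /ioK (bigD1 e) //= eK /io.
have [h|h] := ae_pm R e t; first by rewrite h eqxx in He.
by rewrite h subrr !mul0r.
Qed.

Definition rJ (V : finType) (K : {set {set V}}) : rel V :=
  fun x y => [exists e in K, (x \in e) && (y \in e)].

Lemma conn_closed (V : finType) (K : {set {set V}}) (P : pred V) u y :
  (forall x y, rJ K x y -> P x -> P y) -> P u -> connect (rJ K) u y -> P y.
Proof.
move=> H Pu /connectP [pth pp ->]; elim: pth u Pu pp => //= z pth IH x Px /andP[rxz pz].
exact: IH (H _ _ rxz Px) pz.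
Qed.

Lemma two_elt (R : realType) (V : finType) (e : {set V}) (t : {ffun V -> bool}) x y :
  #|e| = 2%N -> x \in e -> y \in e -> ae R e t = 1 -> t x = t y.
Proof.
move=> he; have /cards2P [a [b [ab ->]]] : #|e| == 2%N by rewrite he.
rewrite /ae big_setU1 /= ?big_set1; last by rewrite in_set1.
move=> hx hy hab.
have Hab : t a = t b.
  move: hab; case: (t a); case: (t b); rewrite /spin //= => h; exfalso; move: h; clear; lra.
by move: hx hy; rewrite !in_set2 => /orP[/eqP->|/eqP->] /orP[/eqP->|/eqP->].
Qed.
Definition hi (R : realType) (V : finType) (u w : V) (t : {ffun V -> bool}) : R :=
  spin R (t u) * spin R (t w).

Lemma hi_pm (R : realType) (V : finType) (u w : V) t : hi R u w t = 1 \/ hi R u w t = -1.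
Proof.
rewrite /hi; case: (spin_pm R (t u)) => ->; case: (spin_pm R (t w)) => ->;
  rewrite ?mulr1 ?mulrNN ?mulr1 ?mul1r; by [left|right].
Qed.

Lemma hi_xs (R : realType) (V : finType) (u w : V) s r :
  hi R u w (xs s r) = hi R u w s * hi R u w r.
Proof. by rewrite /hi !ffunE !spin_xnor; ring. Qed.

Lemma Mq_le0 (R : realType) (V : finType) (K : {set {set V}}) (u : V) (k : nat)
  (v : 'I_k -> V) (i0 : 'I_k) :
  (forall e, e \in K -> #|e| = 2%N) -> connect (rJ K) u (v i0) ->
  \sum_t ioK R K t * (1 - \sum_(i < k) hi R u (v i) t) <= 0.
Proof.
move=> hK ci0.
set P := fun t : {ffun V -> bool} => [forall e in K, ae R e t == 1].
rewrite (eq_bigr (fun t => (if P t then 1 else 0) -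
                          \sum_(i < k) (if P t then hi R u (v i) t else 0))); last first.
  move=> t _; rewrite ioK_ind -/(P t); case: (P t); first by rewrite mul1r.
  by rewrite mul0r big1 ?subr0.
rewrite sumrB exchange_big /= subr_le0 (bigD1 i0) //=.
have -> : \sum_t (if P t then 1 else 0) = \sum_t (if P t then hi R u (v i0) t else 0 : R).
  apply: eq_bigr => t _; case Pt: (P t) => //.
  have : t u == t (v i0).
    apply: (@conn_closed _ K (fun y => t u == t y) u) ci0 => //.
    move=> x y /existsP [e /andP[eK /andP[xe ye]]] /eqP ->.
    apply/eqP; apply: (two_elt (R := R) (hK e eK) xe ye).
    by move/forallP: Pt => /(_ e); rewrite eK /= => /eqP.
  by rewrite /hi => /eqP ->; case: (t (v i0)); rewrite /spin ?mulr1 ?mulrNN ?mulr1.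
rewrite lerDl; apply: sumr_ge0 => i _; apply: char_sum_ge0.
- by move=> s; apply: hi_pm.
- by move=> s r; apply: hi_xs.
- move=> s r /forallP Ps /forallP Pr; apply/forallP => e; apply/implyP => eK.
  move: (Ps e) (Pr e); rewrite eK /= ae_xs => /eqP -> /eqP ->; by rewrite mulr1.
Qed.

Definition pI (R : realType) (V : finType) (u : V) (k : nat) (v : 'I_k -> V)
  (s : {ffun V -> bool}) : R :=
  if [forall i, s (v i)] then spin R (s u) else 0.

Lemma P_ge0 (R : realType) (V : finType) (L : {set {set V}}) (u : V) (k : nat)
  (v : 'I_k -> V) :
  0 <= \sum_s aL R L s * pI R u v s.
Proof.
rewrite (eq_bigr (fun s : {ffun V -> bool} => if [forall i, s (v i)] then aL R L s * spin R (s u) else 0));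
  last by move=> s _; rewrite /pI; case: ifP; rewrite ?mulr0.
apply: char_sum_ge0.
- move=> s; case: (aL_pm R L s) => ->; case: (spin_pm R (s u)) => ->;
  rewrite ?mulr1 ?mulrNN ?mulr1 ?mul1r; by [left|right].
- by move=> s r; rewrite aL_xs ffunE spin_xnor; ring.
- move=> s r /forallP Ps /forallP Pr; apply/forallP => i.
  by rewrite ffunE (Ps i) (Pr i).
Qed.

Lemma P_eq0 (R : realType) (V : finType) (K L : {set {set V}}) (u : V) (k : nat)
  (v : 'I_k -> V) :
  (forall e, e \in K -> #|e| = 2%N) -> (forall e, e \in L -> e \in K) ->
  (forall i, ~~ connect (rJ K) u (v i)) ->
  \sum_s aL R L s * pI R u v s = 0.
Proof.
move=> hK hLK hnc.
set rho := [ffun x => ~~ connect (rJ K) u x].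
set S := \sum_s _.
have arho : aL R L rho = 1.
  apply: big1 => e _; case eL: (e \in L) => //.
  have eK := hLK e eL.
  case: (boolP [exists x in e, connect (rJ K) u x]).
    case/existsP => x0 /andP[x0e cx0].
    rewrite /ae (eq_bigr (fun _ => -1)); last first.
      move=> y ye; rewrite ffunE.
      have -> : connect (rJ K) u y.
        apply: connect_trans cx0 (connect1 _).
        by apply/existsP; exists e; rewrite eK x0e ye.
      by [].
    by rewrite prodr_const (hK e eK) expr2 mulrNN mulr1.
  rewrite negb_exists => /forallP H.
  apply: big1 => y ye; rewrite ffunE.
  by have := H y; rewrite ye /= => /negbTE ->.
have HS : S = - S.
  rewrite {1}/S -(sum_xs rho) /S -sumrN; apply: eq_bigr => s _.
  rewrite aL_xs arho mulr1 /pI.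
  have -> : [forall i, xs s rho (v i)] = [forall i, s (v i)].
    apply: eq_forallb => i; rewrite /rho !ffunE.
    by rewrite (negbTE (hnc i)); case: (s (v i)).
  case: ifP; last by rewrite !mulr0 oppr0.
  move=> _; rewrite /rho !ffunE connect0 /=.
  have -> : spin R (s u == false) = - spin R (s u) by case: (s u); rewrite /spin ?opprK.
  by rewrite mulrN.
lra.
Qed.

Lemma term_le0 (R : realType) (V : finType) (E : {set {set V}}) (J : {set V} -> R)
  (hE : forall e, e \in E -> #|e| = 2%N)
  (hJ : forall e, e \in E -> 0 <= J e)
  (u : V) (k : nat) (v : 'I_k -> V) K L :
  coef E J K L * ((\sum_s aL R L s * pI R u v s) *
                  (\sum_t ioK R K t * (1 - \sum_(i < k) hi R u (v i) t))) <= 0.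
Proof.
case: (eqVneq (coef E J K L) 0) => [->|cne]; first by rewrite mul0r.
have [hLK hKE] := coef_supp cne.
have hK : forall e, e \in K -> #|e| = 2%N by move=> e eK; exact: hE (hKE e eK).
case: (boolP [exists i, connect (rJ K) u (v i)]).
  case/existsP => i0 ci0.
  apply: mulr_ge0_le0; first exact: coef_ge0.
  apply: mulr_ge0_le0; first exact: P_ge0.
  exact: Mq_le0 hK ci0.
rewrite negb_exists => /forallP H.
by rewrite (P_eq0 R hK hLK H) mul0r mulr0.
Qed.
Lemma energyE (R : realType) (V : finType) (E : {set {set V}}) (J : {set V} -> R) s :
  ising_energy E J s = \sum_(e in E) J e * ae R e s.
Proof. by []. Qed.

Lemma w_flip (R : realType) (V : finType) (E : {set {set V}}) (J : {set V} -> R)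
  (hE : forall e, e \in E -> #|e| = 2%N) s :
  ising_weight E J (xs s [ffun _ => false]) = ising_weight E J s.
Proof.
rewrite /ising_weight !energyE; congr expR; apply: eq_bigr => e eE.
rewrite ae_xs.
have -> : ae R e [ffun _ : V => false] = 1.
  rewrite /ae (eq_bigr (fun _ => -1)); last by move=> x _; rewrite ffunE.
  by rewrite prodr_const (hE e eE) expr2 mulrNN mulr1.
by rewrite mulr1.
Qed.

Lemma w_gt0 (R : realType) (V : finType) (E : {set {set V}}) (J : {set V} -> R) s :
  0 < ising_weight E J s.
Proof. exact: expR_gt0. Qed.

Lemma half_sum (R : realType) (V : finType) (G : {ffun V -> bool} -> R) (x : V) :
  (forall s, G (xs s [ffun _ => false]) = G s) ->
  \sum_s G s = 2 * \sum_(s : {ffun V -> bool} | s x) G s.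
Proof.
move=> HG; rewrite (bigID (fun s : {ffun V -> bool} => s x)) /=.
have -> : \sum_(s : {ffun V -> bool} | ~~ s x) G s = \sum_(s : {ffun V -> bool} | s x) G s.
  rewrite big_mkcond [RHS]big_mkcond -(sum_xs [ffun _ => false]).
  apply: eq_bigr => s _; rewrite HG ffunE ffunE.
  by case: (s x).
by rewrite mulr2n mulrDl mul1r.
Qed.

Lemma cond_expE (R : realType) (V : finType) (E : {set {set V}}) (J : {set V} -> R)
  (f : {ffun V -> bool} -> R) (A : pred {ffun V -> bool}) :
  ising_Z E J != 0 ->
  cond_exp E J f A =
  (\sum_(s | A s) ising_weight E J s * f s) / (\sum_(s | A s) ising_weight E J s).
Proof.
move=> Z0; rewrite /cond_exp /ising_mu.
have -> : \sum_(s | A s) ising_weight E J s / ising_Z E J * f s =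
          (\sum_(s | A s) ising_weight E J s * f s) / ising_Z E J.
  by rewrite mulr_suml; apply: eq_bigr => s _; rewrite mulrAC.
rewrite -mulr_suml invf_div mulrA divfK //.
Qed.
Theorem corollary2p6 (R : realType) (V : finType) (E : {set {set V}})
  (J : {set V} -> R)
  (hE : forall e, e \in E -> #|e| = 2%N)
  (hJ : forall e, e \in E -> 0 <= J e)
  (u : V) (k : nat) (v : 'I_k -> V) :
  cond_exp E J (fun s => spin R (s u)) (fun s => [forall i, s (v i)])
  <= \sum_(i < k) cond_exp E J (fun s => spin R (s u)) (fun s => s (v i)).
Proof.
set w := ising_weight E J.
set Z := ising_Z E J.
set s1 : {ffun V -> bool} := [ffun _ => true].
have Zpos : 0 < Z.
  rewrite /Z /ising_Z (bigD1 s1) //= -/w.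
  apply: ltr_pwDl; first exact: w_gt0.
  by apply: sumr_ge0 => s _; apply: ltW; apply: w_gt0.
have Z0 : Z != 0 by rewrite gt_eqF.
set Zi := fun i : 'I_k => \sum_s w s * hi R u (v i) s.
have RHSE : forall i, cond_exp E J (fun s => spin R (s u)) (fun s => s (v i)) = Zi i / Z.
  move=> i; rewrite cond_expE // -/w.
  have HD := @half_sum R V w (v i) (@w_flip R V E J hE).
  have HN := @half_sum R V (fun s => w s * hi R u (v i) s) (v i).
  have HN' : \sum_s w s * hi R u (v i) s =
             2 * \sum_(s : {ffun V -> bool} | s (v i)) w s * spin R (s u).
    rewrite HN; last by move=> s; rewrite /w (@w_flip R V E J hE) hi_xs /hi !ffunE /spin; ring.
    congr (_ * _); apply: eq_bigr => s si; rewrite /hi si /spin mulr1.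
    by [].
  rewrite /Zi HN'.
  have -> : Z = 2 * \sum_(s : {ffun V -> bool} | s (v i)) w s by rewrite -HD.
  set a := \sum_(s | _) _; set b := \sum_(s | _) _.
  have bpos : 0 < b.
    rewrite /b (bigD1 s1) /= ?ffunE //.
    apply: ltr_pwDl; first exact: w_gt0.
    by apply: sumr_ge0 => s _; apply: ltW; apply: w_gt0.
  field; by rewrite gt_eqF.
under eq_bigr => i _ do rewrite RHSE.
rewrite cond_expE // -/w.
set Nw := \sum_(s | _) _; set Dw := \sum_(s | _) _.
have Dpos : 0 < Dw.
  rewrite /Dw (bigD1 s1) /=; last by apply/forallP => i; rewrite ffunE.
  apply: ltr_pwDl; first exact: w_gt0.
  by apply: sumr_ge0 => s _; apply: ltW; apply: w_gt0.
pose q t := 1 - \sum_(i < k) hi R u (v i) t.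
have key : \sum_s \sum_t (w s * w (xs s t)) * (pI R u v s * q t) = Nw * Z - Dw * \sum_i Zi i.
  have split1 : forall s t, (w s * w (xs s t)) * (pI R u v s * q t) =
      (w s * w (xs s t)) * pI R u v s -
      \sum_(i < k) (w s * w (xs s t)) * (pI R u v s * hi R u (v i) t).
    by move=> s t; rewrite /q mulrBr mulr1 mulr_sumr mulrBr mulr_sumr.
  under eq_bigr => s _ do under eq_bigr => t _ do rewrite split1.
  under eq_bigr => s _ do rewrite sumrB.
  rewrite sumrB; congr (_ - _).
    symmetry; rewrite /Nw mulr_suml big_mkcond; apply: eq_bigr => s _.
    rewrite /pI; case: ifP => _; last by rewrite big1 // => t _; rewrite mulr0.
    rewrite /Z /ising_Z -/w.
    rewrite (_ : \sum_s0 w s0 = \sum_t w (xs s t)); last first.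
      by rewrite -(sum_xs s w); apply: eq_bigr => t _; rewrite xsC.
    rewrite mulr_sumr; apply: eq_bigr => t _; ring.
  under eq_bigr => s _ do rewrite exchange_big.
  rewrite exchange_big mulr_sumr; apply: eq_bigr => i _.
  symmetry; rewrite /Dw mulr_suml big_mkcond; apply: eq_bigr => s _.
  rewrite /pI; case: ifP => [/forallP Hs|_]; last by rewrite big1 // => t _; rewrite !mul0r mulr0.
  rewrite /Zi (_ : \sum_s0 w s0 * hi R u (v i) s0 = \sum_t w (xs s t) * hi R u (v i) (xs s t));
    last first.
    by rewrite -(sum_xs s (fun s0 => w s0 * hi R u (v i) s0)); apply: eq_bigr => t _; rewrite xsC.
  rewrite mulr_sumr; apply: eq_bigr => t _.
  rewrite hi_xs /hi (Hs i) /spin; ring.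
have le0 : \sum_s \sum_t (w s * w (xs s t)) * (pI R u v s * q t) <= 0.
  rewrite /w DZ_expand; apply: sumr_le0 => K _; apply: sumr_le0 => L _.
  exact: term_le0.
rewrite -mulr_suml ler_pdivrMr // mulrAC ler_pdivlMr //.
nra.
Qed.
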